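(* Let $D$ be a strongly connected digraph with girth $g$ (having at least one cycle), and let $T$ be a DFS tree of $D$ rooted at $r$, of length $t$, with levels $V_0,\ldots,V_t$. Then for each $h$ with $0\le h\le t-g+2$, the set $W_h=\bigcup_{i=0}^{g-2}V_{h+i}$ induces an acyclic subdigraph of $D$, and there is no backward arc with both ends in $W_h$.
   Context: Digraphs are finite and loopless; paths and cycles are directed; $l(\cdot)$ denotes length. Girth is the length of a shortest directed cycle. A DFS tree $T$ of a strongly connected digraph $D$ rooted at $r$ is the spanning out-branching produced by a depth-first search started at $r$. $P_u$ is the unique $ru$-path in $T$; the length $t$ of $T$ is the length of a longest path in $T$; the levels are $V_i=\{u: l(P_u)=i\}$, $0\le i\le t$. An arc $(u,v)$ is a backward arc if $T$ contains a $vu$-path. *)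

(* Defs.v *)
From mathcomp Require Import all_boot.
Set Implicit Arguments. Unset Strict Implicit. Unset Printing Implicit Defensive.

(* A digraph on a finite vertex type V is an arc relation e : rel V
   (finite; looplessness is an explicit hypothesis `irreflexive e`). *)

Section Digraphs.
Variable V : finType.

Definition dcycle (e : rel V) (c : seq V) : bool :=
  [&& c != [::], uniq c & cycle e c].

Definition is_girth (e : rel V) (g : nat) : Prop :=
  (exists c, dcycle e c /\ size c = g) /\
  (forall c, dcycle e c -> g <= size c).

Definition strongly_connected (e : rel V) : Prop :=
  forall x y, connect e x y.

(* ---- Depth-first search, as a nondeterministic process ----
   A DFS state is (stack, visited set, tree arcs). *)
Definition dfs_state := (seq V * {set V} * {set V * V})%type.

Inductive dfs_step (e : rel V) : dfs_state -> dfs_state -> Prop :=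
| dfs_push (u v : V) (s : seq V) (vis : {set V}) (A : {set V * V}) :
    e u v -> v \notin vis ->
    dfs_step e (u :: s, vis, A) (v :: u :: s, v |: vis, (u, v) |: A)
| dfs_pop (u : V) (s : seq V) (vis : {set V}) (A : {set V * V}) :
    (forall v, e u v -> v \in vis) ->
    dfs_step e (u :: s, vis, A) (s, vis, A).

Inductive dfs_run (e : rel V) : dfs_state -> dfs_state -> Prop :=
| dfs_run_refl st : dfs_run e st st
| dfs_run_step st1 st2 st3 :
    dfs_step e st1 st2 -> dfs_run e st2 st3 -> dfs_run e st1 st3.

Definition dfs_tree (e : rel V) (r : V) (A : {set V * V}) : Prop :=
  exists vis : {set V},
    dfs_run e ([:: r], [set r], set0) ([::], vis, A).

Definition tarc (A : {set V * V}) : rel V := fun x y => (x, y) \in A.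

Definition in_level (A : {set V * V}) (r u : V) (i : nat) : Prop :=
  exists p : seq V, [/\ path (tarc A) r p, last r p = u & size p = i].

(* A directed path in T: distinct vertices x :: p with consecutive T-arcs;
   its length is the number of arcs, size p. *)
Definition tpath (A : {set V * V}) (x : V) (p : seq V) : bool :=
  path (tarc A) x p && uniq (x :: p).

Definition tree_length (A : {set V * V}) (t : nat) : Prop :=
  (exists x p, tpath A x p /\ size p = t) /\
  (forall x p, tpath A x p -> size p <= t).

Definition backward_arc (e : rel V) (A : {set V * V}) (u v : V) : Prop :=
  e u v /\ connect (tarc A) v u.

Definition inW (A : {set V * V}) (r : V) (g h : nat) (u : V) : Prop :=
  exists i, h <= i <= h + g - 2 /\ in_level A r u i.

End Digraphs.

(* Main.v *)
Require Import Defs.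
From mathcomp Require Import all_boot.
From mathcomp Require Import zify.

Set Implicit Arguments. Unset Strict Implicit. Unset Printing Implicit Defensive.

Section Proof.
Variable V : finType.
Variable e : rel V.
Variable r : V.

Record Inv (s : seq V) (vis : {set V}) (A : {set V * V}) (fin : seq V) : Prop := {
 iA_e : forall x y, (x,y) \in A -> e x y;
 iA_vis : forall x y, (x,y) \in A -> y \in vis;
 ir_vis : r \in vis;
 iA_r : forall x, (x,r) \notin A;
 iA_un : forall x x' y, (x,y) \in A -> (x',y) \in A -> x = x';
 is_vis : {subset s <= vis};
 ifin_vis : {subset fin <= vis};
 ivis : forall x, x \in vis -> (x \in s) || (x \in fin);
 is_uniq : uniq s;
 is_fin : forall x, x \in s -> x \notin fin;
 is_path : sorted (fun a b => (b,a) \in A) s;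
 ifin : forall x y, x \in fin -> e x y ->
     (index y fin < index x fin) \/ connect (tarc A) y x }.

Definition InvS (st : dfs_state V) fin := Inv st.1.1 st.1.2 st.2 fin.

Lemma stack_conn (A : {set V * V}) u s :
  path (fun a b => (b,a) \in A) u s -> forall y, y \in u :: s -> connect (tarc A) y u.
Proof.
elim: s u => [|w s IH] u /=.
  by move=> _ y; rewrite inE => /eqP ->; apply: connect0.
case/andP=> hwu hp y; rewrite !inE => /orP [/eqP -> | hy]; first exact: connect0.
have hwu' : tarc A w u := hwu.
apply: (connect_trans _ (connect1 hwu')).
by apply: IH => //; rewrite inE.
Qed.

Lemma step_inv st1 st2 fin : dfs_step e st1 st2 -> InvS st1 fin ->
  exists fin', InvS st2 fin'.
Proof.
case=> [u v s vis A huv hv | u s vis A hu]; rewrite /InvS /= => I.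
- exists fin; split.
  + move=> x y /setU1P [[-> ->] //|]; exact: (iA_e I).
  + move=> x y /setU1P [[_ ->]|h]; first by rewrite setU11.
    by rewrite in_setU1 (iA_vis I h) orbT.
  + by rewrite in_setU1 (ir_vis I) orbT.
  + move=> x; rewrite in_setU1 negb_or (iA_r I) andbT.
    apply/negP => /eqP [_ hr]; by move: hv; rewrite -hr (ir_vis I).
  + move=> x x' y /setU1P [[-> ->]|h1] /setU1P [h2|h2].
    * by case: h2.
    * by move: hv; rewrite (iA_vis I h2).
    * by case: h2 => _ hy; move: hv; rewrite -hy (iA_vis I h1).
    * exact: (iA_un I h1 h2).
  + move=> x; rewrite in_cons => /orP [/eqP ->|h]; first by rewrite setU11.
    by rewrite in_setU1 (is_vis I h) orbT.
  + by move=> x h; rewrite in_setU1 (ifin_vis I h) orbT.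
  + move=> x /setU1P [->|h]; first by rewrite mem_head.
    by case/orP: (ivis I h) => h'; rewrite ?h' ?orbT // in_cons h' orbT.
  + rewrite cons_uniq (is_uniq I) andbT; apply/negP => h.
    by move: hv; rewrite (is_vis I h).
  + move=> x; rewrite in_cons => /orP [/eqP ->|h]; last exact: (is_fin I h).
    by apply/negP => h; move: hv; rewrite (ifin_vis I h).
  + rewrite /= setU11 /=.
    apply: (@sub_path _ (fun a b => (b,a) \in A)); last exact: (is_path I).
    by move=> a b h; rewrite in_setU1 h orbT.
  + move=> x y hx hxy; case: (ifin I hx hxy) => [->|h]; [by left|right].
    apply: connect_sub h => a b h; apply: connect1.
    by rewrite /tarc in_setU1; rewrite /tarc in h; rewrite h orbT.
- have hs := is_uniq I; move: hs => /= /andP [hus hs].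
  exists (rcons fin u); split; try exact: (iA_e I); try exact: (iA_vis I);
    try exact: (ir_vis I); try exact: (iA_r I); try exact: (iA_un I).
  + by move=> x h; apply: (is_vis I); rewrite in_cons h orbT.
  + move=> x; rewrite mem_rcons in_cons => /orP [/eqP ->|h]; last exact: (ifin_vis I h).
    by apply: (is_vis I); rewrite mem_head.
  + move=> x h; rewrite mem_rcons in_cons; case/orP: (ivis I h) => [|->]; last by rewrite !orbT.
    by rewrite in_cons => /orP [->|->]; rewrite ?orbT.
  + exact: hs.
  + move=> x hx; rewrite mem_rcons in_cons negb_or (is_fin I) ?andbT ?in_cons ?hx ?orbT //.
    by apply/eqP => hxu; move: hus; rewrite -hxu hx.
  + exact: (path_sorted (is_path I)).
  + have ufin : u \notin fin by apply: (is_fin I); rewrite mem_head.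
    move=> x y; rewrite -cats1 !index_cat mem_cat /= inE => /orP [hx|/eqP ->] hxy.
    * rewrite hx; case: (ifin I hx hxy) => [h|]; [left|by right].
      have : y \in fin by rewrite -index_mem; apply: (ltn_trans h); rewrite index_mem.
      by move=> ->.
    * rewrite (negbTE ufin).
      case/orP: (ivis I (hu _ hxy)) => hy.
      -- right; exact: (stack_conn (is_path I) hy).
      -- by left; rewrite hy; apply: (leq_trans (_ : _ < size fin)); [rewrite index_mem | apply: leq_addr].
Qed.

Lemma run_inv st1 st2 fin : dfs_run e st1 st2 -> InvS st1 fin ->
  exists fin', InvS st2 fin'.
Proof.
move=> H; elim: H fin => [st fin I|s1 s2 s3 hs _ IH fin I]; first by exists fin.
by case: (step_inv hs I) => fin' I'; apply: (IH fin').
Qed.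

Lemma last_vis (A : {set V * V}) (vis : {set V}) :
  (forall x y, (x,y) \in A -> y \in vis) ->
  forall x p, x \in vis -> path (tarc A) x p -> last x p \in vis.
Proof.
move=> hA x p; elim: p x => [|y p IH] x //= hx /andP [hxy hp].
exact: (IH y (hA _ _ hxy) hp).
Qed.

Lemma level_uniq (A : {set V * V}) :
  (forall x, (x,r) \notin A) ->
  (forall x x' y, (x,y) \in A -> (x',y) \in A -> x = x') ->
  forall p1 p2, path (tarc A) r p1 -> path (tarc A) r p2 ->
    last r p1 = last r p2 -> size p1 = size p2.
Proof.
move=> hr hun p1; elim/last_ind: p1 => [|p1 x IH] p2; case/lastP: p2 => [|p2 y] //.
- rewrite rcons_path last_rcons /= => _ /andP [_ h] hy.
  by move: (hr (last r p2)); rewrite /tarc -hy in h; rewrite h.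
- rewrite rcons_path last_rcons /= => /andP [_ h] _ hy.
  by move: (hr (last r p1)); rewrite /tarc hy in h; rewrite h.
- rewrite !rcons_path !last_rcons !size_rcons => /andP [h1 a1] /andP [h2 a2] hxy.
  rewrite /tarc hxy in a1; congr S; apply: IH => //; exact: (hun _ _ _ a1 a2).
Qed.

Lemma decr_weak (f : V -> nat) x q :
  path (fun a b => f b < f a) x q -> f (last x q) <= f x.
Proof.
elim: q x => [|y q IH] x //= /andP [h hp].
apply: leq_trans (IH _ hp) _; exact: ltnW.
Qed.

End Proof.

Theorem mainTheorem13 (V : finType) (e : rel V) (r : V) (g t : nat)
    (A : {set V * V})
    (Hloop : irreflexive e)
    (Hsc : strongly_connected e)
    (Hg : is_girth e g)
    (HT : dfs_tree e r A)
    (Ht : tree_length A t) :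
  forall h : nat, h + g <= t + 2 ->
    (* W_h induces an acyclic subdigraph *)
    (forall c : seq V, dcycle e c -> ~ (forall u, u \in c -> inW A r g h u)) /\
    (* no backward arc has both ends in W_h *)
    (forall u v : V, backward_arc e A u v -> inW A r g h u -> inW A r g h v -> False).
Proof.
move=> h _.
case: HT => vis run.
have init : InvS e r ([:: r], [set r], set0) [::].
  rewrite /InvS /=; split => //.
  - by move=> x y; rewrite in_set0.
  - by move=> x y; rewrite in_set0.
  - exact: set11.
  - by move=> x; rewrite in_set0.
  - by move=> x x' y; rewrite in_set0.
  - by move=> x; rewrite inE => /eqP ->; rewrite set11.
  - by move=> x; rewrite inE => /eqP ->; rewrite mem_head.
have [fin I] := run_inv run init.
rewrite /InvS /= in I.
have back : forall u v : V, backward_arc e A u v -> inW A r g h u -> inW A r g h v -> False.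
  move=> u v [euv cvu] [iu [/andP [hiu1 hiu2] [pu [pu1 pu2 pu3]]]]
    [iv [/andP [hiv1 hiv2] [pv [pv1 pv2 pv3]]]].
  case/connectP: cvu => q hq.
  case/shortenP: hq => q' hq' uq' _ hlast.
  have hp : path (tarc A) r (pv ++ q') by rewrite cat_path pv1 pv2 hq'.
  have hl : last r (pv ++ q') = u by rewrite last_cat pv2.
  have := level_uniq (iA_r I) (iA_un I) pu1 hp; rewrite pu2 hl size_cat pv3 => /(_ erefl) hsz.
  have q'n : q' != [::].
    by apply/eqP => q0; move: hlast euv; rewrite q0 /= => ->; rewrite Hloop.
  have dc : dcycle e (v :: q').
    rewrite /dcycle uq' /= rcons_path -hlast euv andbT.
    exact: (sub_path (iA_e I) hq').
  have := Hg.2 _ dc; rewrite /= => hg.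
  move: q'n; case: q' {hq' uq' hlast hp hl dc} hsz hg => // z q'' hsz hg _.
  simpl in hsz, hg. lia.
split => //.
move=> c hc hall.
have infin : forall u, u \in c -> u \in fin.
  move=> u /hall [i [_ [p [p1 p2 _]]]].
  have := last_vis (iA_vis I) (ir_vis I) p1; rewrite p2 => /(ivis I).
  by rewrite in_nil.
move: hc; rewrite /dcycle; case: c hall infin => // x p hall infin /and3P [_ _ hcyc].
have hp : path (fun a b => index b fin < index a fin) x (rcons p x).
  apply: (@sub_in_path _ (mem (x :: p)) e); last exact: hcyc.
    move=> a b ha hb eab; case: (ifin I (infin a ha) eab) => // hc.
    by case: (back a b (conj eab hc) (hall a ha) (hall b hb)).
  apply/allP => z; rewrite in_cons mem_rcons => /orP [/eqP ->|//].
  exact: mem_head.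
move: hp; case: p {hall infin hcyc} => [|y p] /= => [/andP [] |/andP [hy hp]].
  by rewrite ltnn.
have := decr_weak hp; rewrite last_rcons => hh.
have := leq_trans hy hh; by rewrite ltnn.
Qed.
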